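(* Let $A$ be a nonempty set of positive integers, let $s\in A$ and let $n$ be a positive integer. Then $$N^p_A(n)-N^p_A(n-s)=p_A(n-s)+N^p_{A\setminus\{s\}}(n).$$
   Context: For a set $B$ of positive integers, $N^p_B(m)$ is the total number of parts, summed over all partitions of $m$ with parts in $B$, and $p_B(m)$ is the number of partitions of $m$ with parts in $B$. Conventions: $p_B(0)=1$, $N^p_B(0)=0$, and $p_B(m)=N^p_B(m)=0$ for $m<0$; $N^p_{\emptyset}\equiv 0$. *)

(* Defs.v *)
From mathcomp Require Import all_boot all_order all_algebra.
Set Implicit Arguments. Unset Strict Implicit. Unset Printing Implicit Defensive.

(* A partition of m with parts in B: a nonincreasing sequence of positive
   parts, each in B, summing to m (order-normalized multiset of parts). *)
Definition is_partition (B : pred nat) (m : nat) (s : seq nat) : bool :=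
  [&& sorted geq s, all (fun x => (0 < x) && B x) s & sumn s == m].

Fixpoint cands (k m : nat) : seq (seq nat) :=
  match k with
  | 0 => [:: [::]]
  | k'.+1 => [::] :: [seq x :: s | x <- iota 1 m, s <- cands k' m]
  end.

(* Every partition of m has at most m parts, each at most m, so it occurs in
   cands m m; the list of partitions of m with parts in B: *)
Definition partitions (B : pred nat) (m : nat) : seq (seq nat) :=
  [seq s <- undup (cands m m) | is_partition B m s].

Definition pnat (B : pred nat) (m : nat) : nat := size (partitions B m).
Definition Nnat (B : pred nat) (m : nat) : nat :=
  \sum_(s <- partitions B m) size s.

Definition pB (B : pred nat) (m : int) : int :=
  match m with Posz k => (pnat B k)%:Z | Negz _ => 0%R end.
Definition NB (B : pred nat) (m : int) : int :=
  match m with Posz k => (Nnat B k)%:Z | Negz _ => 0%R end.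

Lemma sanity : (pnat predT 4 = 5 /\ Nnat predT 4 = 12 /\ pnat predT 0 = 1 /\ Nnat predT 0 = 0)%N.
Proof. by rewrite /Nnat !unlock; vm_compute. Qed.

(* Main.v *)
Require Import Defs.
From mathcomp Require Import all_boot all_order all_algebra zify.

Lemma in_cands k m t : size t <= k -> all (fun x => 0 < x <= m) t -> t \in cands k m.
Proof.
elim: t k => [|x t IH] [|k] //=; rewrite ?in_cons ?eqxx //.
rewrite ltnS => hk /andP[hx ht]; apply/orP; right.
apply: allpairs_f; last exact: IH.
by rewrite mem_iota; lia.
Qed.

Lemma size_le_sumn t : all (fun x => 0 < x) t -> size t <= sumn t.
Proof. elim: t => //= x t IH /andP[hx /IH]; lia. Qed.

Lemma mem_le_sumn x t : x \in t -> x <= sumn t.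
Proof. elim: t => //= y t IH; rewrite in_cons => /orP[/eqP->|/IH]; lia. Qed.

Lemma mem_partitions B m t : (t \in partitions B m) = is_partition B m t.
Proof.
rewrite mem_filter mem_undup andbC; case ip: (is_partition B m t); rewrite ?andbT ?andbF //.
move: ip => /and3P[_ ha /eqP hs]. apply: in_cands.
  rewrite -hs; apply: size_le_sumn; apply: sub_all ha => x /andP[] //.
apply/allP => x xt; move/allP: ha => /(_ x xt) /andP[-> _] /=.
by rewrite -hs mem_le_sumn.
Qed.

Lemma uniq_partitions B m : uniq (partitions B m).
Proof. by rewrite filter_uniq // undup_uniq. Qed.

Lemma geq_trans : transitive geq.
Proof. move=> a b c /= h1 h2; lia. Qed.
Lemma geq_anti : antisymmetric geq.
Proof. move=> a b /andP[] /= h1 h2; lia. Qed.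

Lemma main (A : pred nat) s n : 0 < s -> A s -> 
  Nnat A n = (if s <= n then Nnat A (n - s) + Defs.pnat A (n - s) else 0) + Nnat (fun x => A x && (x != s)) n.
Proof.
move=> s0 As.
rewrite /Nnat (bigID (fun t => s \in t)) /=.
congr (_ + _); last first.
  rewrite -big_filter; apply: perm_big; apply: uniq_perm.
  - by rewrite filter_uniq // uniq_partitions.
  - exact: uniq_partitions.
  move=> t; rewrite mem_filter !mem_partitions /is_partition.
  case: (sorted _ _) (sumn t == n) => [] [] /=; rewrite ?andbF ?andbT //.
  elim: t => //= x t IH; rewrite in_cons negb_or -IH eq_sym.
  by case: (x == s); rewrite ?andbF //= ?andbT; case: (0 < x); case: (A x); rewrite //= ?andbF.
rewrite -big_filter.
set F := filter _ _.
have memF t : t \in F -> [/\ s \in t, sorted geq t, all (fun x => (0 < x) && A x) t & sumn t = n].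
  by rewrite mem_filter mem_partitions => /andP[-> /and3P[-> -> /eqP ->]].
case: leqP => hsn; last first.
  rewrite big_seq big1 // => t /memF[st _ _ hs].
  by have := mem_le_sumn _ _ st; lia.
have permG t : s \in t -> perm_eq t (s :: rem s t) by apply: perm_to_rem.
have remP t : t \in F -> is_partition A (n - s) (rem s t).
  move=> /memF[st so ha hs]; rewrite /is_partition.
  rewrite (subseq_sorted geq_trans (rem_subseq _ _)) //=.
  have pp := permG t st.
  rewrite (perm_all _ pp) /= in ha; case/andP: ha => _ ->.
  rewrite (perm_sumn pp) /= in hs; apply/eqP; lia.
have -> : \sum_(t <- F) size t = \sum_(u <- map (rem s) F) (size u + 1).
  rewrite big_map big_seq [RHS]big_seq; apply: eq_bigr => t /memF[st _ _ _].
  by rewrite size_rem // addn1 prednK // -has_predT; apply/hasP; exists s.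
have U1 : uniq (map (rem s) F).
  rewrite map_inj_in_uniq; first by rewrite filter_uniq // uniq_partitions.
  move=> t1 t2 /memF[s1 o1 _ _] /memF[s2 o2 _ _] e.
  apply: (sorted_eq geq_trans geq_anti) => //.
  apply: perm_trans (permG _ s1) _; rewrite e perm_sym; exact: permG.
have M : map (rem s) F =i partitions A (n - s).
  move=> u; rewrite mem_partitions; apply/idP/idP.
    by case/mapP => t tF ->; apply: remP.
  move=> up; case/and3P: up => su ha /eqP hs; apply/mapP; exists (sort geq (s :: u)).
    rewrite mem_filter mem_partitions mem_sort mem_head /is_partition sort_sorted; last by move=> a b; apply: leq_total.
    rewrite (perm_all _ (permEl (perm_sort _ _))) (perm_sumn (permEl (perm_sort _ _))) /= ha As s0 /=.
    apply/eqP; lia.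
  have sS : s \in sort geq (s :: u) by rewrite mem_sort mem_head.
  apply: (sorted_eq geq_trans geq_anti) => //.
    apply: (subseq_sorted geq_trans (rem_subseq _ _)).
    by rewrite sort_sorted //; move=> a b; apply: leq_total.
  rewrite perm_sym -(perm_cons s); apply: perm_trans _ (permEl (perm_sort geq (s :: u))).
  by rewrite perm_sym permG.
have pe : perm_eq (map (rem s) F) (partitions A (n - s)).
  by apply: uniq_perm => //; apply: uniq_partitions.
rewrite (perm_big _ pe) big_split /= sum1_size //.
Qed.
Import GRing.Theory.
Local Open Scope ring_scope.

Theorem theorem5 (A : pred nat) (s n : nat) :
  (forall x, A x -> (0 < x)%N) -> A s -> (0 < n)%N ->
  NB A n%:Z - NB A (n%:Z - s%:Z) =
  pB A (n%:Z - s%:Z) + NB (fun x => A x && (x != s)) n%:Z.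
Proof.
move=> Apos As _.
have s0 := Apos s As.
have := @main A s n s0 As.
case: (leqP s n) => hsn.
  rewrite subzn //= => ->.
  rewrite !PoszD; lia.
case E: (n%:Z - s%:Z) => [k|k] /=.
  exfalso; lia.
by move=> ->; rewrite add0n subr0 add0r.
Qed.
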